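(* Let $\phi:[\tau,\tau+1]\to\mathbb R$ be right-continuous with finitely many discontinuities, continuously differentiable between them, with $\phi(\tau)\ge0$, and let $\phi^+=\sup_{t\in[\tau,\tau+1]}\phi(t)$. Let $0<\nu\le1$, $\gamma\ge0$, $M\ge0$, and $\mu,a_1,a_2,a_3\ge0$ with $\mu a_1<1$. Suppose that at every point of differentiability $\frac{d\phi}{dt}\le-\nu\phi+\gamma$, and that the sum over all discontinuity points $t$ of the positive parts $\max\{0,\phi(t)-\phi(t^-)\}$ is at most $\mu(a_1\phi^++a_2\phi(\tau)+a_3M)$. If \[ \mu\Big[\frac{a_1(1+\mu a_2)}{1-\mu a_1}+a_2\Big]\le\frac\nu8\quad\text{and}\quad\phi(\tau)\ge\frac{8\mu}{\nu}\,a_3M\,\frac1{1-\mu a_1}, \] then $\phi(\tau+1)\le\big(1-\frac\nu4\big)\phi(\tau)+\frac{\gamma}{1-\mu a_1}$. *)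

(* Defs.v *)
From Stdlib Require Import Reals Lra List.
Open Scope R_scope.

Definition right_cont_at (phi : R -> R) (t : R) : Prop :=
  forall eps, 0 < eps -> exists delta, 0 < delta /\
    forall s, t <= s < t + delta -> Rabs (phi s - phi t) < eps.

Definition left_limit (phi : R -> R) (t L : R) : Prop :=
  forall eps, 0 < eps -> exists delta, 0 < delta /\
    forall s, t - delta < s < t -> Rabs (phi s - L) < eps.

Definition jump_sum (phi phim : R -> R) (D : list R) : R :=
  fold_right (fun t acc => Rmax 0 (phi t - phim t) + acc) 0 D.

(* Main.v *)
Require Import Defs.
From Stdlib Require Import Reals Lra List.
Open Scope R_scope.

Lemma cont_eps g c : continuity_pt g c ->
  forall eps, 0 < eps -> exists d, 0 < d /\ forall x, Rabs (x - c) < d -> Rabs (g x - g c) < eps.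
Proof.
  intros H eps He. destruct (H eps He) as [d [Hd H']]. exists d. split; auto.
  intros x Hx. destruct (Req_dec_T c x) as [<-|Hn].
  - rewrite Rminus_diag, Rabs_R0. auto.
  - apply (H' x). split. split; [exact I|auto]. exact Hx.
Qed.

Lemma prod_lim (g f : R -> R) c L (P : R -> Prop) : continuity_pt g c ->
  (forall eps, 0 < eps -> exists d, 0 < d /\ forall s, P s -> Rabs (s - c) < d -> Rabs (f s - L) < eps) ->
  forall eps, 0 < eps -> exists d, 0 < d /\ forall s, P s -> Rabs (s - c) < d -> Rabs (g s * f s - g c * L) < eps.
Proof.
  intros Hg Hf eps He.
  assert (H1 : 0 < Rmin 1 (eps / (2 * (Rabs L + 1)))).
  { apply Rmin_pos. lra. apply Rdiv_lt_0_compat. lra. pose proof (Rabs_pos L). lra. }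
  destruct (cont_eps g c Hg _ H1) as [d1 [Hd1 Hg']].
  assert (H2 : 0 < eps / (2 * (Rabs (g c) + 1))).
  { apply Rdiv_lt_0_compat. lra. pose proof (Rabs_pos (g c)). lra. }
  destruct (Hf _ H2) as [d2 [Hd2 Hf']].
  exists (Rmin d1 d2). split. apply Rmin_pos; auto.
  intros s Ps Hs.
  assert (Hs1 : Rabs (s - c) < d1). { pose proof (Rmin_l d1 d2). lra. }
  assert (Hs2 : Rabs (s - c) < d2). { pose proof (Rmin_r d1 d2). lra. }
  specialize (Hg' s Hs1). specialize (Hf' s Ps Hs2).
  replace (g s * f s - g c * L) with (g s * (f s - L) + (g s - g c) * L) by ring.
  eapply Rle_lt_trans. apply Rabs_triang. rewrite !Rabs_mult.
  pose proof (Rmin_l 1 (eps / (2 * (Rabs L + 1)))).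
  pose proof (Rmin_r 1 (eps / (2 * (Rabs L + 1)))).
  assert (Hgs : Rabs (g s) <= Rabs (g c) + 1).
  { replace (g s) with (g c + (g s - g c)) by ring.
    eapply Rle_trans. apply Rabs_triang. lra. }
  pose proof (Rabs_pos L). pose proof (Rabs_pos (g c)). pose proof (Rabs_pos (f s - L)).
  pose proof (Rabs_pos (g s - g c)).
  assert (A : Rabs (g s) * Rabs (f s - L) <= eps / 2).
  { apply Rle_trans with ((Rabs (g c) + 1) * (eps / (2 * (Rabs (g c) + 1)))).
    apply Rmult_le_compat; try lra. apply Rabs_pos.
    right. field. lra. }
  assert (B : Rabs (g s - g c) * Rabs L < eps / 2).
  { apply Rle_lt_trans with ((eps / (2 * (Rabs L + 1))) * Rabs L).
    apply Rmult_le_compat_r; lra.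
    apply Rlt_le_trans with ((eps / (2 * (Rabs L + 1))) * (Rabs L + 1)).
    apply Rmult_lt_compat_l; lra. right. field. lra. }
  lra.
Qed.

Definition Kf (phi phim : R -> R) (D : list R) (t : R) : R :=
  fold_right (fun x acc => (if Rle_dec x t then Rmax 0 (phi x - phim x) else 0) + acc) 0 D.
Definition jat (phi phim : R -> R) (D : list R) (c : R) : R :=
  fold_right (fun x acc => (if Req_dec_T x c then Rmax 0 (phi x - phim x) else 0) + acc) 0 D.

Lemma Kf_nonneg phi phim D t : 0 <= Kf phi phim D t.
Proof. induction D as [|x D IH]; simpl. lra.
  destruct (Rle_dec x t); pose proof (Rmax_l 0 (phi x - phim x)); lra. Qed.

Lemma Kf_le phi phim D t : Kf phi phim D t <= jump_sum phi phim D.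
Proof. induction D as [|x D IH]; simpl. lra.
  destruct (Rle_dec x t); pose proof (Rmax_l 0 (phi x - phim x)); lra. Qed.

Lemma jat_nonneg phi phim D c : 0 <= jat phi phim D c.
Proof. induction D as [|x D IH]; simpl. lra.
  destruct (Req_dec_T x c); pose proof (Rmax_l 0 (phi x - phim x)); lra. Qed.

Lemma jat_ge phi phim D c : In c D -> Rmax 0 (phi c - phim c) <= jat phi phim D c.
Proof. induction D as [|x D IH]; simpl. tauto.
  intros [->|H].
  - destruct (Req_dec_T c c); [|congruence]. pose proof (jat_nonneg phi phim D c). lra.
  - specialize (IH H). destruct (Req_dec_T x c); pose proof (Rmax_l 0 (phi x - phim x)); lra. Qed.

Lemma jat_notin phi phim D c : ~ In c D -> jat phi phim D c = 0.
Proof. induction D as [|x D IH]; simpl. auto.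
  intros H. rewrite IH by tauto. destruct (Req_dec_T x c). subst; tauto. lra. Qed.

Lemma Kf_const phi phim D c s : c <= s -> (forall x, In x D -> ~ (c < x <= s)) ->
  Kf phi phim D s = Kf phi phim D c.
Proof. intros Hcs. induction D as [|x D IH]; simpl; intros H. auto.
  rewrite IH by auto.
  destruct (Rle_dec x s), (Rle_dec x c); try lra.
  exfalso. apply (H x); auto. lra. Qed.

Lemma Kf_left phi phim D c s : s < c -> (forall x, In x D -> ~ (s < x < c)) ->
  Kf phi phim D c = Kf phi phim D s + jat phi phim D c.
Proof. intros Hcs. induction D as [|x D IH]; simpl; intros H. lra.
  rewrite IH by auto.
  destruct (Rle_dec x s), (Rle_dec x c), (Req_dec_T x c); try lra.
  exfalso. apply (H x); auto. lra. Qed.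

Lemma gap_right (D : list R) c : exists d, 0 < d /\ forall x, In x D -> ~ (c < x < c + d).
Proof. induction D as [|x D IH]. exists 1. split. lra. simpl; tauto.
  destruct IH as [d [Hd H]].
  destruct (Rle_dec x c).
  - exists d. split; auto. intros y [->|Hy]. lra. auto.
  - exists (Rmin d (x - c)). split. apply Rmin_pos; lra.
    pose proof (Rmin_l d (x - c)). pose proof (Rmin_r d (x - c)).
    intros y [->|Hy]. lra. intro. apply (H y Hy). lra. Qed.

Lemma gap_left (D : list R) c : exists d, 0 < d /\ forall x, In x D -> ~ (c - d < x < c).
Proof. induction D as [|x D IH]. exists 1. split. lra. simpl; tauto.
  destruct IH as [d [Hd H]].
  destruct (Rle_dec c x).
  - exists d. split; auto. intros y [->|Hy]. lra. auto.
  - exists (Rmin d (c - x)). split. apply Rmin_pos; lra.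
    pose proof (Rmin_l d (c - x)). pose proof (Rmin_r d (c - x)).
    intros y [->|Hy]. lra. intro. apply (H y Hy). lra. Qed.

Lemma real_ind (w : R -> R) a b B : a < b -> w a <= B ->
  (forall c, a <= c < b -> exists d, 0 < d /\ forall s, c < s < c + d -> w s <= w c) ->
  (forall c, a < c <= b -> (exists d, 0 < d /\ forall s, c - d < s < c -> w s <= B) -> w c <= B) ->
  forall t, a <= t <= b -> w t <= B.
Proof.
  intros Hab Ha HR HL.
  set (E := fun t => a <= t <= b /\ forall s, a <= s <= t -> w s <= B).
  assert (Hb : bound E). { exists b. intros t [Ht _]. lra. }
  assert (He : exists x, E x). { exists a. split. lra. intros s Hs. replace s with a by lra. auto. }
  destruct (completeness E Hb He) as [c [Hub Hlub]].
  assert (Hac : a <= c). { apply Hub. destruct He as [x Hx]. unfold E. split. lra. intros s Hs. replace s with a by lra. auto. }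
  assert (Hcb : c <= b). { apply Hlub. intros t [Ht _]. lra. }
  assert (Q : forall s, a <= s < c -> w s <= B).
  { intros s Hs. destruct (Rle_dec c s) as [|Hn]. lra.
    assert (exists t, E t /\ s < t) as [t [[Ht1 Ht2] Hst]].
    { apply Classical_Prop.NNPP. intro Hno. apply Hn. apply Hlub. intros t Et.
      destruct (Rle_dec t s). auto. exfalso. apply Hno. exists t. split; auto. lra. }
    apply Ht2. lra. }
  assert (Wc : w c <= B).
  { destruct (Req_dec_T c a) as [->|Hne]. auto.
    assert (a < c) by (destruct Hac; [auto|congruence]). apply HL. lra. exists (c - a). split. lra. intros s Hs. apply Q. lra. }
  assert (Ec : E c). { split. lra. intros s Hs. destruct (Req_dec_T s c) as [->|]. auto. apply Q. lra. }
  destruct (Req_dec_T c b) as [->|Hne].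
  - destruct Ec as [_ Ec]. intros t Ht. apply Ec. lra.
  - exfalso. assert (c < b) by (destruct Hcb; [auto|congruence]). destruct (HR c) as [d [Hd Hd']]. lra.
    set (c' := Rmin (c + d / 2) b).
    assert (Ec' : E c').
    { pose proof (Rmin_l (c + d / 2) b). pose proof (Rmin_r (c + d / 2) b).
      assert (c < c'). { unfold c'. apply Rmin_glb_lt; lra. }
      unfold c' in *. split. lra. intros s Hs. destruct (Rle_dec s c).
      - destruct Ec as [_ Ec]. apply Ec. lra.
      - eapply Rle_trans. apply Hd'. lra. auto. }
    pose proof (Hub _ Ec'). assert (c < c'). { unfold c'. apply Rmin_glb_lt; lra. } lra.
Qed.

Lemma lim_le (f : R -> R) c L B : left_limit f c L ->
  (exists d, 0 < d /\ forall s, c - d < s < c -> f s <= B) -> L <= B.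
Proof.
  intros HL [d [Hd H]]. destruct (Rle_dec L B) as [|Hn]. auto. exfalso.
  destruct (HL (L - B)) as [d' [Hd' H']]. lra.
  set (s := c - Rmin d d' / 2).
  pose proof (Rmin_l d d'). pose proof (Rmin_r d d'). pose proof (Rmin_pos d d' Hd Hd').
  assert (A : c - d < s < c). unfold s; lra.
  assert (A' : c - d' < s < c). unfold s; lra.
  specialize (H s A). specialize (H' s A'). apply Rabs_def2 in H'. lra.
Qed.

Lemma dE nu tau x : derivable_pt_lim (fun t => exp (nu * (t - tau))) x (nu * exp (nu * (x - tau))).
Proof.
  replace (nu * exp (nu * (x - tau))) with (exp (nu * (x - tau)) * nu) by ring.
  apply (derivable_pt_lim_comp (fun t => nu * (t - tau)) exp).
  - assert (H2 : derivable_pt_lim (fun t => t - tau) x 1).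
    { pose proof (derivable_pt_lim_minus id (fct_cte tau) x 1 0 (derivable_pt_lim_id x) (derivable_pt_lim_const tau x)) as H.
      replace (1 - 0) with 1 in H by ring. exact H. }
    pose proof (derivable_pt_lim_mult (fct_cte nu) (fun t => t - tau) x 0 1 (derivable_pt_lim_const nu x) H2) as H.
    cbv beta in H. replace (0 * (x - tau) + fct_cte nu x * 1) with nu in H by (unfold fct_cte; ring). exact H.
  - apply derivable_pt_lim_exp.
Qed.

Lemma cE nu tau x : continuity_pt (fun t => exp (nu * (t - tau))) x.
Proof. apply derivable_continuous_pt. exists (nu * exp (nu * (x - tau))). apply dE. Qed.

Lemma dW nu tau phi k x l : derivable_pt_lim phi x l ->
  derivable_pt_lim (fun t => exp (nu * (t - tau)) * (phi t + k)) x
    (nu * exp (nu * (x - tau)) * (phi x + k) + exp (nu * (x - tau)) * l).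
Proof.
  intros H. apply (derivable_pt_lim_mult (fun t => exp (nu * (t - tau))) (fun t => phi t + k)).
  apply dE. pose proof (derivable_pt_lim_plus phi (fct_cte k) x l 0 H (derivable_pt_lim_const k x)) as H'.
  replace (l + 0) with l in H' by ring. exact H'.
Qed.

Lemma rcW nu tau phi k c : right_cont_at phi c ->
  forall eps, 0 < eps -> exists d, 0 < d /\ forall s, c <= s < c + d ->
   Rabs (exp (nu * (s - tau)) * (phi s + k) - exp (nu * (c - tau)) * (phi c + k)) < eps.
Proof.
  intros H eps He.
  destruct (prod_lim (fun t => exp (nu * (t - tau))) (fun t => phi t + k) c (phi c + k) (fun s => c <= s) (cE nu tau c)) with (eps := eps) as [d [Hd Hd']]; auto.
  - intros e Hep. destruct (H e Hep) as [d [Hd Hd']]. exists d. split; auto.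
    intros s Hs Hs'. replace (phi s + k - (phi c + k)) with (phi s - phi c) by ring.
    apply Hd'. apply Rabs_def2 in Hs'. lra.
  - exists d. split; auto. intros s Hs. apply Hd'. lra. apply Rabs_def1; lra.
Qed.

Lemma llW nu tau phi k c L : left_limit phi c L ->
  left_limit (fun s => exp (nu * (s - tau)) * (phi s + k)) c (exp (nu * (c - tau)) * (L + k)).
Proof.
  intros H eps He.
  destruct (prod_lim (fun t => exp (nu * (t - tau))) (fun t => phi t + k) c (L + k) (fun s => s < c) (cE nu tau c)) with (eps := eps) as [d [Hd Hd']]; auto.
  - intros e Hep. destruct (H e Hep) as [d [Hd Hd']]. exists d. split; auto.
    intros s Hs Hs'. replace (phi s + k - (L + k)) with (phi s - L) by ring.
    apply Hd'. apply Rabs_def2 in Hs'. lra.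
  - exists d. split; auto. intros s Hs. apply Hd'. lra. apply Rabs_def1; lra.
Qed.

Lemma cont_ll f c : continuity_pt f c -> left_limit f c (f c).
Proof. intros H eps He. destruct (cont_eps f c H eps He) as [d [Hd H']].
  exists d. split; auto. intros s Hs. apply H'. apply Rabs_def1; lra. Qed.

Lemma mono_open (w w' : R -> R) a b : (forall x, a < x < b -> derivable_pt_lim w x (w' x) /\ w' x <= 0) ->
  forall x y, a < x -> x <= y -> y < b -> w y <= w x.
Proof.
  intros H x y Hx Hxy Hy. destruct Hxy as [Hxy| ->]; [|lra].
  destruct (MVT_cor2 w w' x y Hxy) as [c [Hc Hc']].
  intros z Hz. apply H. lra.
  assert (w' c <= 0) by (apply H; lra). nra.
Qed.
Theorem mainTheorem13
  (phi : R -> R) (tau : R)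
  (D : list R) (phim : R -> R) (phi' : R -> R) (phip : R)
  (nu gamma M mu a1 a2 a3 : R)
  (HDnodup : NoDup D)
  (HDin : forall t, In t D -> tau < t <= tau + 1)
  (Hrc : forall t, tau <= t < tau + 1 -> right_cont_at phi t)
  (Hcont : forall t, tau < t < tau + 1 -> ~ In t D -> continuity_pt phi t)
  (Hend : ~ In (tau + 1) D -> left_limit phi (tau + 1) (phi (tau + 1)))
  (Hleft : forall t, In t D -> left_limit phi t (phim t))
  (HC1 : forall t, tau < t < tau + 1 -> ~ In t D ->
           derivable_pt_lim phi t (phi' t) /\ continuity_pt phi' t)
  (Hphi0 : 0 <= phi tau)
  (Hphip : is_lub (fun y => exists t, tau <= t <= tau + 1 /\ y = phi t) phip)
  (Hnu : 0 < nu <= 1) (Hgamma : 0 <= gamma) (HM : 0 <= M)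
  (Hmu : 0 <= mu) (Ha1 : 0 <= a1) (Ha2 : 0 <= a2) (Ha3 : 0 <= a3)
  (Hmua1 : mu * a1 < 1)
  (Hderiv : forall t l, tau < t < tau + 1 -> derivable_pt_lim phi t l ->
              l <= - nu * phi t + gamma)
  (Hjump : jump_sum phi phim D <= mu * (a1 * phip + a2 * phi tau + a3 * M))
  (Hsmall : mu * (a1 * (1 + mu * a2) / (1 - mu * a1) + a2) <= nu / 8)
  (Hbig : phi tau >= 8 * mu / nu * a3 * M * (1 / (1 - mu * a1))) :
  phi (tau + 1) <= (1 - nu / 4) * phi tau + gamma / (1 - mu * a1).
Proof.
  set (g := gamma / nu).
  assert (Hg : nu * g = gamma) by (unfold g; field; lra).
  assert (Hg0 : 0 <= g) by (unfold g, Rdiv; apply Rmult_le_pos; [lra | left; apply Rinv_0_lt_compat; lra]).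
  set (E := fun t => exp (nu * (t - tau))).
  set (K := Kf phi phim D).
  assert (G : forall t, tau <= t <= tau + 1 -> E t * (phi t - g - K t) <= phi tau - g).
  { apply (real_ind (fun t => E t * (phi t - g - K t))).
    - lra.
    - unfold E. replace (nu * (tau - tau)) with 0 by ring. rewrite exp_0.
      pose proof (Kf_nonneg phi phim D tau). unfold K. lra.
    - intros c Hc. destruct (gap_right D c) as [d1 [Hd1 Hgp]].
      exists (Rmin d1 (tau + 1 - c)). split. apply Rmin_pos; lra.
      pose proof (Rmin_l d1 (tau + 1 - c)). pose proof (Rmin_r d1 (tau + 1 - c)).
      set (d := Rmin d1 (tau + 1 - c)) in *.
      intros s Hs.
      assert (HK : K s = K c).
      { unfold K. apply Kf_const. lra. intros x Hx Hx'. apply (Hgp x Hx). lra. }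
      rewrite HK.
      set (k := - g - K c).
      replace (phi s - g - K c) with (phi s + k) by (unfold k; ring).
      replace (phi c - g - K c) with (phi c + k) by (unfold k; ring).
      assert (Mono : forall x y, c < x -> x <= y -> y < c + d -> E y * (phi y + k) <= E x * (phi x + k)).
      { apply (mono_open (fun t => E t * (phi t + k))
                 (fun x => nu * E x * (phi x + k) + E x * phi' x)).
        intros x Hx.
        assert (Hx1 : tau < x < tau + 1) by lra.
        assert (Hx2 : ~ In x D) by (intro Hin; apply (Hgp x Hin); lra).
        destruct (HC1 x Hx1 Hx2) as [Hd _]. split.
        - apply dW. auto.
        - pose proof (Hderiv x (phi' x) Hx1 Hd) as Hb.
          assert (HE : 0 < E x) by apply exp_pos.
          pose proof (Kf_nonneg phi phim D c) as HK0. fold K in HK0.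
          unfold k. rewrite <- Hg in Hb.
          assert (Heq : nu * E x * (phi x + (- g - K c)) + E x * phi' x = E x * (nu * phi x + phi' x - nu * g) - nu * E x * K c) by ring.
          rewrite Heq. assert (0 <= nu * E x * K c) by (apply Rmult_le_pos; [apply Rmult_le_pos|]; lra).
          assert (E x * (nu * phi x + phi' x - nu * g) <= 0).
          { assert (nu * phi x + phi' x - nu * g <= 0) by lra. nra. }
          lra. }
      destruct (Rle_dec (E s * (phi s + k)) (E c * (phi c + k))) as [|Hn]; auto. exfalso.
      destruct (rcW nu tau phi k c (Hrc c Hc) (E s * (phi s + k) - E c * (phi c + k))) as [d2 [Hd2 Hr]]. lra.
      set (r := c + Rmin d2 (s - c) / 2).
      pose proof (Rmin_l d2 (s - c)). pose proof (Rmin_r d2 (s - c)). pose proof (Rmin_pos d2 (s - c) Hd2 ltac:(lra)).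
      assert (Hr1 : c < r <= s) by (unfold r; lra).
      specialize (Hr r ltac:(unfold r; lra)). fold (E r) (E c) in Hr. apply Rabs_def2 in Hr.
      specialize (Mono r s ltac:(lra) ltac:(lra) ltac:(lra)). lra.
    - intros c Hc [d0 [Hd0 H0]]. destruct (gap_left D c) as [d1 [Hd1 Hgp]].
      set (k := - g - K c + jat phi phim D c).
      assert (HL : exists L, left_limit phi c L /\ phi c - jat phi phim D c <= L).
      { destruct (in_dec Req_dec_T c D) as [Hin|Hin].
        - exists (phim c). split. auto. pose proof (jat_ge phi phim D c Hin).
          pose proof (Rmax_r 0 (phi c - phim c)). lra.
        - exists (phi c). rewrite (jat_notin phi phim D c Hin). split; [|lra].
          destruct (Req_dec_T c (tau + 1)) as [->|Hne]. auto.
          apply cont_ll. apply Hcont; auto. destruct Hc as [Hc1 [Hc2|Hc2]]; [lra|congruence]. }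
      destruct HL as [L [HL HLc]].
      assert (Hlim : E c * (L + k) <= phi tau - g).
      { apply (lim_le (fun s => E s * (phi s + k)) c). apply llW. auto.
        exists (Rmin d0 d1). split. apply Rmin_pos; lra.
        pose proof (Rmin_l d0 d1). pose proof (Rmin_r d0 d1).
        intros s Hs. 
        assert (HK : K c = K s + jat phi phim D c).
        { unfold K. apply Kf_left. lra. intros x Hx Hx'. apply (Hgp x Hx). lra. }
        replace (phi s + k) with (phi s - g - K s) by (unfold k; rewrite HK; ring).
        apply H0. lra. }
      assert (HE : 0 < E c) by apply exp_pos.
      assert (phi c - g - K c <= L + k) by (unfold k; lra). nra. }
  set (J := jump_sum phi phim D).
  assert (Bnd : forall t, tau <= t <= tau + 1 -> phi t <= exp (- (nu * (t - tau))) * phi tau + gamma + J).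
  { intros t Ht. specialize (G t Ht). unfold E in G.
    set (x := nu * (t - tau)) in *.
    assert (Hx : 0 <= x <= nu) by (unfold x; split; nra).
    assert (Hinv : exp x * exp (- x) = 1) by (rewrite <- exp_plus; replace (x + - x) with 0 by ring; apply exp_0).
    pose proof (exp_ineq1_le x). pose proof (exp_ineq1_le (- x)). pose proof (exp_pos (- x)).
    assert (Ei1 : exp (- x) <= 1) by nra.
    assert (HKJ : K t <= J) by apply Kf_le.
    pose proof (Kf_nonneg phi phim D t).
    assert (G' : phi t - g - K t <= exp (- x) * (phi tau - g)).
    { apply Rmult_le_compat_l with (r := exp (- x)) in G; [|lra].
      rewrite <- Rmult_assoc, (Rmult_comm (exp (- x))), Hinv, Rmult_1_l in G. exact G. }
    assert (g * (1 - exp (- x)) <= g * nu) by (apply Rmult_le_compat_l; lra).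
    rewrite <- Hg. nra. }
  assert (Hpp : phip <= phi tau + gamma + J).
  { apply Hphip. intros y [t [Ht ->]]. pose proof (Bnd t Ht).
    pose proof (exp_pos (- (nu * (t - tau)))).
    assert (exp (- (nu * (t - tau))) <= 1).
    { pose proof (exp_ineq1_le (nu * (t - tau))).
      assert (Hinv : exp (nu * (t - tau)) * exp (- (nu * (t - tau))) = 1) by (rewrite <- exp_plus; replace (nu * (t - tau) + - (nu * (t - tau))) with 0 by ring; apply exp_0).
      assert (0 <= nu * (t - tau)) by nra. nra. }
    nra. }
  assert (Hfin := Bnd (tau + 1) ltac:(lra)).
  replace (- (nu * (tau + 1 - tau))) with (- nu) in Hfin by ring.
  assert (Hen : exp (- nu) <= 1 - nu / 2).
  { assert (Hinv : exp nu * exp (- nu) = 1) by (rewrite <- exp_plus; replace (nu + - nu) with 0 by ring; apply exp_0).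
    assert (Hsq : exp nu = exp (nu / 2) * exp (nu / 2)) by (rewrite <- exp_plus; f_equal; field).
    pose proof (exp_ineq1_le (nu / 2)). pose proof (exp_pos (- nu)).
    assert (exp nu >= (1 + nu / 2) * (1 + nu / 2)) by (rewrite Hsq; nra).
    assert ((1 - nu / 2) * exp nu >= 1) by nra.
    nra. }
  set (c := 1 - mu * a1) in *.
  assert (Hc : 0 < c) by (unfold c; lra).
  assert (A : mu * (a1 + a2) <= c * nu / 8).
  { replace (mu * (a1 * (1 + mu * a2) / c + a2)) with (mu * (a1 + a2) / c) in Hsmall by (unfold c; field; lra).
    apply Rmult_le_compat_l with (r := c) in Hsmall; [|lra].
    replace (c * (mu * (a1 + a2) / c)) with (mu * (a1 + a2)) in Hsmall by (field; lra). lra. }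
  assert (B : mu * a3 * M <= nu * c * phi tau / 8).
  { apply Rge_le in Hbig. apply Rmult_le_compat_l with (r := nu * c / 8) in Hbig; [|nra].
    replace (nu * c / 8 * (8 * mu / nu * a3 * M * (1 / c))) with (mu * a3 * M) in Hbig by (field; lra). lra. }
  assert (C : c * J <= mu * (a1 + a2) * phi tau + mu * a1 * gamma + mu * a3 * M).
  { assert (0 <= mu * a1) by nra.
    assert (mu * a1 * phip <= mu * a1 * (phi tau + gamma + J)) by (apply Rmult_le_compat_l; lra).
    unfold c. unfold J in *. nra. }
  assert (A' : mu * (a1 + a2) * phi tau <= c * nu / 8 * phi tau) by nra.
  assert (Hfin2 : c * phi (tau + 1) <= c * ((1 - nu / 4) * phi tau + gamma / c)).
  { replace (c * ((1 - nu / 4) * phi tau + gamma / c)) with (c * (1 - nu / 4) * phi tau + gamma) by (field; lra).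
    assert (c * exp (- nu) * phi tau <= c * (1 - nu / 2) * phi tau) by (apply Rmult_le_compat_r; [lra|apply Rmult_le_compat_l; lra]).
    assert (mu * a1 * gamma = gamma - c * gamma) by (unfold c; ring).
    nra. }
  nra.
Qed.
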